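(* Consider an instance of the MSSN-MC-HC problem with $m=|Q|$ sources and costs $c_s>0$, $c_r>0$, for which there exists a feasible solution using exactly one sink. Suppose there exists $\alpha\in(0,1]$ such that $\frac{c_s}{c_r}\ge\lceil\alpha m\rceil(\lceil\alpha m\rceil+1)(h_{\max}-1)$. Then the approximation ratio of SmartSelect on such instances (cost of its output divided by the optimum cost) is at most $1+\frac{1}{\alpha}$.
   Context: MSSN-MC-HC problem: given a finite undirected graph $G=(V,E)$ with $V=Q\cup R\cup B$ (pairwise disjoint; $Q$ = sources, $R$ = potential relay locations, $B$ = potential sink locations), costs $c_s$ per sink and $c_r$ per relay, and a positive integer $h_{\max}$, select $B'\subseteq B$, $R'\subseteq R$ such that in the subgraph induced by $Q\cup R'\cup B'$ every source has a path of at most $h_{\max}$ edges to some sink of $B'$ (a feasible solution), minimizing $c_s|B'|+c_r|R'|$. A feasible solution ''using exactly one sink'' has $|B'|=1$. SmartSelect algorithm: (1) If for some $b\in B$ every source has a path of at most $h_{\max}$ edges to $b$ in the subgraph induced by $Q\cup B$, output $(\{b\},\emptyset)$. (2) If some source has no path of at most $h_{\max}$ edges in $G$ to any sink, declare infeasible. (3) For each $b_i\in B$ let $Q_i$ be the set of sources whose shortest path to $b_i$ in $G$ has at most $h_{\max}$ edges, and $R_i$ the set of relays whose shortest path to $b_i$ has at most $h_{\max}-1$ edges. (4) Greedy phase, iterations $j=0,1,\dots$: $B^{(0)}=B$, $Q_i^{(0)}=Q_i$; $B^{(j)}$ is the set of sinks not yet picked and $Q_i^{(j)}$ the set of sources of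 $Q_i$ not yet covered. In iteration $j$, for each $b_i\in B^{(j)}$, a relay-selection subroutine (e.g. the SPTiRP algorithm) applied to the subgraph of $G$ induced by $Q_i^{(j)}\cup R_i\cup\{b_i\}$ returns a set $\hat R_i^{(j)}\subseteq R_i$ consisting of the relays on one chosen path of at most $h_{\max}$ edges from each source of $Q_i^{(j)}$ to $b_i$. Let $n_i^{(j)}$ be the number of relays in $\hat R_i^{(j)}$ not selected in earlier iterations (earlier-selected relays have cost zero thereafter), and $C_i^{(j)}=\frac{c_s+c_r n_i^{(j)}}{|Q_i^{(j)}|}$. The sink $b_i$ with least $C_i^{(j)}$ is picked (ties broken in favor of larger $|Q_i^{(j)}|$), its sources $Q_i^{(j)}$ become covered and the relays $\hat R_i^{(j)}$ are selected. Stop when all sources are covered; output the picked sinks and selected relays. *)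

(* Defs.v *)
From mathcomp Require Import all_boot all_order all_algebra.
From mathcomp Require Import boolp.
Set Implicit Arguments. Unset Strict Implicit. Unset Printing Implicit Defensive.
Import Order.TTheory GRing.Theory Num.Theory.
Local Open Scope ring_scope.

Section MSSN.
Variables (K : archiRealFieldType) (T : finType) (e : rel T).
Variables (Q Rl B : {set T}) (hmax : nat) (cs cr : K).

Definition hpath (S : {set T}) (h : nat) (x y : T) : Prop :=
  exists p : seq T, [/\ path e x p, last x p = y, (size p <= h)%N
                      & all (fun v => v \in S) (x :: p)].

Definition feasible (Bp Rp : {set T}) : Prop :=
  [/\ Bp \subset B, Rp \subset Rl &
      forall q, q \in Q -> exists2 b, b \in Bp & hpath (Q :|: Rp :|: Bp) hmax q b].

Definition cost (Bp Rp : {set T}) : K := cs * #|Bp|%:R + cr * #|Rp|%:R.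

Definition optimal (Bp Rp : {set T}) : Prop :=
  feasible Bp Rp /\ forall Bp' Rp', feasible Bp' Rp' -> cost Bp Rp <= cost Bp' Rp'.

Definition Qi (b : T) : {set T} := [set q in Q | `[< hpath setT hmax q b >] ].
Definition Ri (b : T) : {set T} := [set r in Rl | `[< hpath setT hmax.-1 r b >] ].

(* Spec of the relay-selection subroutine: Rh consists of the relays on one chosen path
   of at most hmax edges, in the subgraph induced by Qj ∪ R_b ∪ {b}, from each source
   of Qj to b. *)
Definition valid_relays (b : T) (Qj Rh : {set T}) : Prop :=
  exists pf : T -> seq T,
    (forall q, q \in Qj ->
       [/\ path e q (pf q), last q (pf q) = b, (size (pf q) <= hmax)%N
         & all (fun v => v \in Qj :|: Ri b :|: [set b]) (q :: pf q)]) /\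
    Rh = \bigcup_(q in Qj) [set v | (v \in q :: pf q) && (v \in Rl)].

(* state = (picked sinks, selected relays, uncovered sources) *)
Definition state := ({set T} * {set T} * {set T})%type.

(* one iteration of the greedy phase (any valid subroutine output, any tie-breaking
   among sinks with equal C and equal |Q_i^(j)|) *)
Definition greedy_step (s s' : state) : Prop :=
  let: (P, Sel, Unc) := s in
  let cand i := [&& i \in B, i \notin P & Qi i :&: Unc != set0] in
  exists (rh : T -> {set T}) (b : T),
    let C i := (cs + cr * #|rh i :\: Sel|%:R) / #|Qi i :&: Unc|%:R in
    [/\ cand b,
        (forall i, cand i -> valid_relays i (Qi i :&: Unc) (rh i)),
        (forall i, cand i -> C b < C i \/ (C b = C i /\ (#|Qi i :&: Unc| <= #|Qi b :&: Unc|)%N))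
      & s' = (b |: P, Sel :|: rh b, Unc :\: (Qi b :&: Unc))].

Inductive greedy_reach : state -> state -> Prop :=
| gr_refl s : greedy_reach s s
| gr_step s s' s'' : greedy_step s s' -> greedy_reach s' s'' -> greedy_reach s s''.

Definition step1_sink (b : T) : Prop :=
  b \in B /\ forall q, q \in Q -> hpath (Q :|: B) hmax q b.

Definition smartselect_output (Bo Ro : {set T}) : Prop :=
  (exists b, step1_sink b /\ Bo = [set b] /\ Ro = set0) \/
  [/\ ~ (exists b, step1_sink b),
      (forall q, q \in Q -> exists2 b, b \in B & hpath setT hmax q b)
    & greedy_reach (set0, set0, Q) (Bo, Ro, set0)].

End MSSN.

(* Main.v *)
Require Import Defs.
From mathcomp Require Import all_boot all_order all_algebra.
From mathcomp Require Import boolp.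
From mathcomp Require Import zify ring lra.
Import Order.TTheory GRing.Theory Num.Theory.
Local Open Scope ring_scope.

Section Aux.
Variables (T : finType) (e : rel T) (Q Rl B : {set T}) (hmax : nat).
Hypotheses (dQR : [disjoint Q & Rl]) (dQB : [disjoint Q & B]) (dRB : [disjoint Rl & B]).

Lemma relay_card q p b : q \in Q -> b \in B -> last q p = b -> (size p <= hmax)%N ->
  (#|[set v | (v \in q :: p) && (v \in Rl)]| <= hmax.-1)%N.
Proof.
move=> qQ bB lb sp.
have qb : q != b.
  by apply/eqP=> E; move: bB; rewrite -E (disjointFr dQB qQ).
have sub : [set v | (v \in q :: p) && (v \in Rl)] \subset [set v in q :: p] :\: [set q; b].
  apply/subsetP => v; rewrite !inE => /andP[vin vR]; rewrite vin andbT negb_or.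
  apply/andP; split; apply/eqP => E; move: vR; rewrite E.
    by rewrite (disjointFr dQR qQ).
  by rewrite (disjointFl dRB bB).
have := subset_leq_card sub.
rewrite cardsDS; last first.
  apply/subsetP=> v; rewrite !inE => /orP[]/eqP->; first by rewrite eqxx.
  by have := mem_last q p; rewrite lb inE.
rewrite cards2 qb.
have -> : #|[set v in q :: p]| = #|q :: p| by rewrite cardsE.
have := card_size (q :: p); rewrite /=.
lia.
Qed.

Lemma valid_card i (Qj Rh : {set T}) : i \in B -> Qj \subset Q -> valid_relays e Rl hmax i Qj Rh ->
  (#|Rh| <= #|Qj| * hmax.-1)%N.
Proof.
move=> iB sQ [pf [Hpf ->]].
apply: (@leq_trans (\sum_(q in Qj) #|[set v | (v \in q :: pf q) && (v \in Rl)]|)).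
  apply: (big_ind2 (fun (S : {set T}) (n : nat) => #|S| <= n)%N).
  - by rewrite cards0.
  - move=> A1 n1 A2 n2 h1 h2; apply: leq_trans (leq_card_setU A1 A2) _.
    exact: leq_add.
  - by [].
rewrite -sum_nat_const; apply: leq_sum => q qin.
have [_ lq sq _] := Hpf q qin.
exact: relay_card (subsetP sQ q qin) iB lq sq.
Qed.
End Aux.
Section Arith.
Variables (K : archiRealFieldType) (cs cr : K) (h k : nat).
Hypotheses (cs0 : 0 < cs) (cr0 : 0 < cr) (k0 : (0 < k)%N)
  (Dk : (k * k.+1)%:R * (cr * h%:R) <= cs).

Definition gg (u : nat) : K := if u is 0 then 0 else 1 + (u.-1)%:R / (k.+1)%:R.
Definition FF (u : nat) : K := cs * gg u + (cr * h%:R) * u%:R.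

Lemma FF0 : FF 0 = 0.
Proof. by rewrite /FF /gg /= mulr0 mulr0 addr0. Qed.

Lemma ggE n : (0 < n)%N -> gg n = 1 + (n%:R - 1) / (k.+1)%:R.
Proof. by case: n => // n _; rewrite /gg -[(n.+1)%:R]natr1 addrK. Qed.

Lemma gg_ge1 u : (0 < u)%N -> 1 <= gg u.
Proof.
case: u => // u _; rewrite /gg /= lerDl.
by rewrite divr_ge0 // ler0n.
Qed.

Lemma arith (u s nb ns : nat) : (0 < s)%N -> (s <= u)%N -> (ns <= u * h)%N ->
  let Cb := (cs + cr * nb%:R) / s%:R in let Cs := (cs + cr * ns%:R) / u%:R in
  Cb < Cs \/ (Cb = Cs /\ (u <= s)%N) ->
  cs + cr * nb%:R + FF (u - s) <= FF u.
Proof.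
move=> s0 su nsu Cb Cs Hmin.
have u0 : (0 < u)%N by apply: leq_trans su.
set D := cr * h%:R.
have D0 : 0 <= D by rewrite /D mulr_ge0 // ?ltW // ler0n.
set X := cs + cr * nb%:R; set Y := cs + cr * ns%:R.
have sr0 : 0 < s%:R :> K by rewrite ltr0n.
have ur0 : 0 < u%:R :> K by rewrite ltr0n.
have Xcs : cs <= X by rewrite /X lerDl mulr_ge0 // ?ltW // ler0n.
have hY : Y <= cs + u%:R * D.
  rewrite /Y lerD2l /D mulrCA ler_wpM2l ?(ltW cr0) // -natrM ler_nat.
  done.
have key : X * u%:R <= Y * s%:R.
  have hle : Cb <= Cs by case: Hmin => [/ltW|[-> _]].
  by move: hle; rewrite /Cb /Cs ler_pdivrMr // mulrAC ler_pdivlMr.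
have key2 : X * u%:R <= (cs + u%:R * D) * s%:R.
  by apply: le_trans key _; rewrite ler_wpM2r // ltW.
have caseEq : s = u -> X + FF (u - s) <= FF u.
  move=> E; rewrite E subnn FF0 addr0 /FF.
  have : X <= cs + u%:R * D.
    by move: key2; rewrite E ler_pM2r.
  have : cs <= cs * gg u by rewrite ler_peMr ?(ltW cs0) // gg_ge1.
  rewrite [D * _]mulrC; lra.
case: (leqP u k) => uk.
  apply: caseEq.
  case: Hmin => [hlt|[_ us]]; last by apply/eqP; rewrite eqn_leq su us.
  have keys : X * u%:R < Y * s%:R.
    by move: hlt; rewrite /Cb /Cs ltr_pdivrMr // mulrAC ltr_pdivlMr.
  apply/eqP; apply: contraTT isT => neq.
  have s1u : (s.+1 <= u)%N by rewrite ltn_neqAle neq su.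
  have sukk : (s * u <= k * k.+1)%N.
    by apply: leq_mul; [apply: leq_trans su uk | apply: leq_trans uk _].
  have h1 : (s * u)%:R * D <= cs.
    apply: le_trans Dk; rewrite ler_wpM2r // ler_nat //.
  have h2 : s%:R + 1 <= u%:R :> K by rewrite natr1 ler_nat.
  have h3 : X * u%:R < (cs + u%:R * D) * s%:R.
    by apply: lt_le_trans keys _; rewrite ler_wpM2r // ltW.
  rewrite natrM in h1.
  have h4 : cs * u%:R <= X * u%:R by rewrite ler_pM2r.
  have h5 : cs * (s%:R + 1) <= cs * u%:R by rewrite ler_pM2l.
  rewrite /D in h1 h3; lra.
have [Esu|neq] := eqVneq s u; first exact: caseEq Esu.
have s1u : (s.+1 <= u)%N by rewrite ltn_neqAle neq su.
rewrite /FF.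
rewrite ggE ?subn_gt0 // ggE // natrB //.
set w := (k.+1)%:R^-1 : K.
have w0 : 0 < w by rewrite invr_gt0 ltr0n.
have wu : 1 <= w * u%:R.
  by rewrite /w mulrC ler_pdivlMr ?ltr0n // mul1r ler_nat.
have Xb : X <= cs * s%:R * w + D * s%:R.
  rewrite -(ler_pM2r ur0); apply: le_trans key2 _.
  have : cs * s%:R <= cs * s%:R * (w * u%:R).
    by rewrite ler_peMr // mulr_ge0 // ?ltW // ler0n.
  move=> ?; nra.
rewrite /D in Xb; lra.
Qed.
End Arith.
Arguments FF {K}.
Arguments gg {K}.

Lemma cardUD (T : finType) (A R : {set T}) : #|A :|: R| = (#|A| + #|R :\: A|)%N.
Proof.
rewrite cardsU cardsD setIC.
have := subset_leq_card (subsetIl R A); lia.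
Qed.

Section Main.
Variables (K : archiRealFieldType) (T : finType) (e : rel T) (Q Rl B : {set T})
  (hmax : nat) (cs cr : K).
Hypotheses (dQR : [disjoint Q & Rl]) (dQB : [disjoint Q & B]) (dRB : [disjoint Rl & B])
  (cs0 : 0 < cs) (cr0 : 0 < cr).
Variables (bs : T) (k : nat).
Hypotheses (bsB : bs \in B) (QbsQ : Q \subset Qi e Q hmax bs) (k0 : (0 < k)%N)
  (Dk : (k * k.+1)%:R * (cr * (hmax.-1)%:R) <= cs).

Lemma inv s s' : greedy_reach e Q Rl B hmax cs cr s s' ->
  forall P Sel Unc Bo Ro, s = (P, Sel, Unc) -> s' = (Bo, Ro, set0) ->
  Unc \subset Q -> (bs \in P -> Unc = set0) ->
  cost cs cr Bo Ro - cost cs cr P Sel <= FF cs cr hmax.-1 k #|Unc|.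
Proof.
elim=> [s0|s0 s1 s2 Hst _ IH] P Sel Unc Bo Ro E0 E1 sUQ Hbs.
  rewrite E0 in E1; case: E1 => -> -> ->.
  by rewrite cards0 FF0 subrr.
subst s0.
move: Hst; rewrite /greedy_step => -[rh [b [cb Hval Hmin Es1]]].
have QiU : Qi e Q hmax bs :&: Unc = Unc.
  by apply/setIidPr; apply: subset_trans sUQ QbsQ.
have IH' := IH _ _ _ _ _ Es1 E1 (subset_trans (subsetDl _ _) sUQ).
move/and3P: (cb) => [bB bP nz].
have bsP : bs \notin P.
  by apply/negP => /Hbs E; move: nz; rewrite E setI0 eqxx.
have Unc0 : Unc != set0 by apply: contraNneq nz => ->; rewrite setI0.
have cbs : [&& bs \in B, bs \notin P & Qi e Q hmax bs :&: Unc != set0].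
  by rewrite bsB bsP QiU Unc0.
have {}IH' := IH' _.
have H1 : bs \in b |: P -> Unc :\: (Qi e Q hmax b :&: Unc) = set0.
  rewrite !inE => /orP[/eqP Eb|bP'].
    by rewrite -Eb QiU setDv.
  by rewrite (Hbs bP') set0D.
have {}IH' := IH' H1.
have Hbsm := Hmin bs cbs.
rewrite QiU in Hbsm.
have Vbs := Hval bs cbs; rewrite QiU in Vbs.
have nsle := @valid_card T e Q Rl B hmax dQR dQB dRB _ _ _ bsB sUQ Vbs.
have ns1 : (#|rh bs :\: Sel| <= #|Unc| * hmax.-1)%N.
  by apply: leq_trans nsle; apply: subset_leq_card; apply: subsetDl.
have s0 : (0 < #|Qi e Q hmax b :&: Unc|)%N by rewrite card_gt0.
have su : (#|Qi e Q hmax b :&: Unc| <= #|Unc|)%N by apply: subset_leq_card; apply: subsetIr.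
have Ha := @arith K cs cr hmax.-1 k cs0 cr0 Dk _ _ _ _ s0 su ns1 Hbsm.
rewrite cardsDS ?subsetIr // in IH'.
move: IH' Ha; rewrite /cost cardsU1 bP.
have -> : #|Sel :|: rh b| = (#|Sel| + #|rh b :\: Sel|)%N.
  exact: cardUD.
rewrite !natrD /=.
move: (FF _ _ _ _ _) (FF _ _ _ _ #|Unc|) => F1 F2.
move: (#|Bo|%:R) (#|Ro|%:R) (#|P|%:R) (#|Sel|%:R) (#|rh b :\: Sel|%:R) => x1 x2 x3 x4 x5.
lra.
Qed.
End Main.

Lemma final_ar (K : archiRealFieldType) (cs D al kk m : K) :
  0 < cs -> 0 <= D -> 0 < al -> 1 <= kk -> 0 <= m -> al * m <= kk ->
  kk * (kk + 1) * D <= cs ->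
  cs * (1 + (m - 1) / (kk + 1)) + D * m <= cs * (1 + al^-1).
Proof.
move=> cs0 D0 al0 kk1 m0 amk Dk.
have kk0 : 0 < kk by apply: lt_le_trans kk1; rewrite ltr01.
have kk10 : 0 < kk + 1 by rewrite addr_gt0 // ltr01.
have p0 : 0 < kk * (kk + 1) by rewrite mulr_gt0.
have Dle : D * m <= cs * m / (kk * (kk + 1)).
  have : D <= cs / (kk * (kk + 1)) by rewrite ler_pdivlMr // mulrC.
  by move/(ler_wpM2r m0); rewrite mulrAC.
have iden : cs * m / kk = cs * (m - 1) / (kk + 1) + cs * (m + kk) / (kk * (kk + 1)).
  field; apply/andP; split; apply: lt0r_neq0 => //.
have h2 : cs * m / (kk * (kk + 1)) <= cs * (m + kk) / (kk * (kk + 1)).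
  rewrite ler_pM2r ?invr_gt0 // ler_pM2l //.
  by rewrite lerDl ltW.
have h3 : cs * m / kk <= cs / al.
  rewrite ler_pdivrMr // -mulrA ler_pM2l //.
  by rewrite mulrC ler_pdivlMr // mulrC.
rewrite mulrDr mulr1 mulrDr mulr1 mulrA.
lra.
Qed.

Theorem corollary1 (K : archiRealFieldType) (T : finType) (e : rel T)
    (Q Rl B : {set T}) (hmax : nat) (cs cr alpha : K) :
  symmetric e -> irreflexive e ->
  [disjoint Q & Rl] -> [disjoint Q & B] -> [disjoint Rl & B] ->
  Q :|: Rl :|: B = setT ->
  (0 < hmax)%N -> 0 < cs -> 0 < cr ->
  (exists Bp Rp, feasible e Q Rl B hmax Bp Rp /\ #|Bp| = 1%N) ->
  0 < alpha <= 1 ->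
  cs / cr >= (Num.ceil (alpha * #|Q|%:R))%:~R * ((Num.ceil (alpha * #|Q|%:R))%:~R + 1)
               * (hmax.-1)%:R ->
  forall Bo Ro, smartselect_output e Q Rl B hmax cs cr Bo Ro ->
  forall Bs Rs, optimal e Q Rl B hmax cs cr Bs Rs ->
  cost cs cr Bo Ro / cost cs cr Bs Rs <= 1 + alpha^-1.
Proof.
move=> _ _ dQR dQB dRB _ _ cs0 cr0 [Bp [Rp [[sBp _ Hfe] cBp]]] /andP[a0 a1] Hratio
  Bo Ro Hout Bs Rs [fBs optBs].
have ai0 : 0 <= alpha^-1 by rewrite invr_ge0 ltW.
have OPT0 : 0 <= cost cs cr Bs Rs.
  by rewrite /cost; apply: addr_ge0; apply: mulr_ge0; rewrite ?ler0n ?ltW.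
have [Q0|[q0 q0Q]] := set_0Vmem Q.
  have : cost cs cr Bs Rs <= cost cs cr (@set0 T) (@set0 T).
    apply: optBs; split; rewrite ?sub0set //.
    by move=> q; rewrite Q0 inE.
  have -> : cost cs cr (@set0 T) (@set0 T) = 0 by rewrite /cost !cards0 !mulr0 addr0.
  move=> O0.
  have -> : cost cs cr Bs Rs = 0 by apply/eqP; rewrite eq_le O0 OPT0.
  by rewrite invr0 mulr0 addr_ge0.
have OPTcs : cs <= cost cs cr Bs Rs.
  have [_ _ /(_ q0 q0Q) [b bBs _]] := fBs.
  have c1 : (1 <= #|Bs|)%N by rewrite card_gt0; apply/set0Pn; exists b.
  rewrite /cost -[X in X <= _]addr0; apply: lerD.
    by rewrite ler_peMr ?(ltW cs0) // ler1n.
  by apply: mulr_ge0; rewrite ?ler0n ?(ltW cr0).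
have OPTp : 0 < cost cs cr Bs Rs by apply: lt_le_trans OPTcs.
suff Hc : cost cs cr Bo Ro <= cs * (1 + alpha^-1).
  rewrite ler_pdivrMr //; apply: le_trans Hc _.
  by rewrite mulrC ler_wpM2l // addr_ge0.
case: Hout => [[b [_ [-> ->]]]|[_ _ Hreach]].
  rewrite /cost cards1 cards0 mulr0 addr0 mulr1.
  by rewrite ler_peMr ?(ltW cs0) // lerDl.
have /cards1P [bs Ebs] : #|Bp| == 1%N by rewrite cBp.
have bsB : bs \in B by apply: (subsetP sBp); rewrite Ebs set11.
have QbsQ : Q \subset Qi e Q hmax bs.
  apply/subsetP => q qQ; rewrite /Qi inE qQ /=; apply/asboolP.
  have [b] := Hfe q qQ; rewrite Ebs inE => /eqP -> [p [pp lp sp _]].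
  by exists p; split => //; apply/allP => v; rewrite inE.
have m0 : (0 < #|Q|)%N by rewrite card_gt0; apply/set0Pn; exists q0.
have cpos : 0 < Num.ceil (alpha * #|Q|%:R) by rewrite ceil_gt0 mulr_gt0 // ltr0n.
have cge := ceil_ge (alpha * #|Q|%:R).
move: cpos cge Hratio; case: (Num.ceil _) => [k|k] //.
move=> kpos cge Hratio.
have k0 : (0 < k)%N by [].
have Dk : (k * k.+1)%:R * (cr * (hmax.-1)%:R) <= cs.
  move: Hratio; rewrite ler_pdivlMr // natrM -[(k.+1)%:R]natr1.
  by move=> H; apply: le_trans H; rewrite le_eqVlt; apply/orP; left; apply/eqP; ring.
have := @inv K T e Q Rl B hmax cs cr dQR dQB dRB cs0 cr0 bs k bsB QbsQ Dk _ _ Hreach _ _ _ _ _ (erefl _) (erefl _) (subxx _).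
rewrite inE => /(_ (fun H => False_ind _ (notF H))).
rewrite /cost !cards0 !mulr0 addr0 subr0 => Hinv.
apply: le_trans Hinv _.
rewrite /FF ggE // -[(k.+1)%:R]natr1.
apply: final_ar => //.
- by apply: mulr_ge0; rewrite ?ler0n ?(ltW cr0).
- by rewrite ler1n.
- by move: Dk; rewrite natrM -[(k.+1)%:R]natr1.
Qed.
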